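(* Let $x$ be a real number with $x>1$ or $x<0$, and let $$F(s)=\frac{20x^2-56x+35}{(4s^2+x(x-1))^2}-\frac{4(x-1)(2x-3)(2x-1)^2}{(4s^2+x(x-1))^3}.$$ Then $$8x^2(1-x)\int_0^{1/4}\frac{sF(s)}{\sqrt{1-4s}}\,ds=3(x-1)R(x)+5x-6.$$
   Context: For real $x$ with $x>1$ or $x<0$, $R(x)=\sqrt x\,\operatorname{arctanh}\frac1{\sqrt x}$, i.e. $R(x)=\frac{\sqrt x}2\log\frac{\sqrt x+1}{\sqrt x-1}$ if $x>1$ and $R(x)=\sqrt{|x|}\arctan\frac1{\sqrt{|x|}}$ if $x<0$; equivalently, for $|x|>1$, $R(x)=\sum_{k\ge0}\frac{x^{-k}}{2k+1}$. *)

(* Defs.v *)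
From Stdlib Require Import Reals.
From Coquelicot Require Import Coquelicot.
Open Scope R_scope.

(* R(x) = sqrt x * arctanh(1/sqrt x), for x > 1 or x < 0 (paper's case split). *)
Definition Rfun (x : R) : R :=
  if Rlt_dec 1 x then sqrt x / 2 * ln ((sqrt x + 1) / (sqrt x - 1))
  else sqrt (- x) * atan (1 / sqrt (- x)).

Definition Ffun (x s : R) : R :=
  (20 * x ^ 2 - 56 * x + 35) / (4 * s ^ 2 + x * (x - 1)) ^ 2
  - 4 * (x - 1) * (2 * x - 3) * (2 * x - 1) ^ 2 / (4 * s ^ 2 + x * (x - 1)) ^ 3.

(* Main.v *)
Require Import Defs.
From Stdlib Require Import Reals Lra Psatz.
From Coquelicot Require Import Coquelicot.
Open Scope R_scope.

Definition Psi (x u : R) : R :=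
  if Rlt_dec 1 x then sqrt x / 2 * ln ((sqrt x + u) / (sqrt x - u))
  else sqrt (- x) * atan (u / sqrt (- x)).

Lemma Psi_der x u : (1 < x \/ x < 0) -> -1 <= u <= 1 ->
  is_derive (Psi x) u (x / (x - u ^ 2)).
Proof.
  intros hx hu. unfold Psi. destruct (Rlt_dec 1 x) as [h1|h1].
  - assert (ha : 1 < sqrt x).
    { rewrite <- sqrt_1. apply sqrt_lt_1; lra. }
    assert (hxa : x = sqrt x * sqrt x) by (rewrite sqrt_sqrt; lra).
    set (a := sqrt x) in *.
    auto_derive.
    + repeat split; try lra. apply Rdiv_lt_0_compat; lra.
    + rewrite hxa. field. split; [|split]; try lra. 
      intro H. nra.
  - assert (hx0 : x < 0) by lra.
    assert (ha : 0 < sqrt (- x)) by (apply sqrt_lt_R0; lra).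
    assert (hxa : - x = sqrt (-x) * sqrt (-x)) by (rewrite sqrt_sqrt; lra).
    set (a := sqrt (-x)) in *.
    assert (Hd : is_derive (fun u => atan (u / a)) u (/ a * / (1 + (u/a)^2))).
    { apply (is_derive_comp atan (fun u => u / a)).
      - apply is_derive_Reals. apply derivable_pt_lim_atan.
      - auto_derive; [lra| field; lra]. }
    replace (x / (x - u^2)) with (a * (/ a * / (1 + (u/a)^2))).
    + apply (is_derive_scal (fun u => atan (u / a))). exact Hd.
    + replace x with (- (a*a)) by lra. field. repeat split; nra.
Qed.

Lemma Psi0 x : Psi x 0 = 0.
Proof.
  unfold Psi. destruct (Rlt_dec 1 x).
  - replace ((sqrt x + 0) / (sqrt x - 0)) with 1.
    + rewrite ln_1; ring.
    + assert (0 < sqrt x) by (apply sqrt_lt_R0; lra). field. lra.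
  - replace (0 / sqrt (-x)) with 0 by (unfold Rdiv; ring). rewrite atan_0; ring.
Qed.

Lemma Psi1 x : Psi x 1 = Rfun x.
Proof. unfold Psi, Rfun. destruct (Rlt_dec 1 x); reflexivity. Qed.

Definition Qf x t := t^4 - 2*t^2 + (2*x-1)^2.
Definition Nf x t := ((3 + 86*x - 156*x^2 + 72*x^3)*t + (-9 - 40*x + 68*x^2 - 32*x^3)*t^3
   + (9+2*x)*t^5 - 3*t^7)/(4*x).
Definition ff x t := 2*x*t/(t^2+2*x-1).
Definition K x t := Nf x t / Qf x t ^ 2 + 3/(8*x^2) * Psi x (ff x t).
Definition Kd x t := (1-t^2)*(8*(4*(x-1)*(2*x-3)*(2*x-1)^2)
   - 2*(20*x^2-56*x+35)*Qf x t)/(Qf x t)^3.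

Lemma Qf_pos x t : (1 < x \/ x < 0) -> 0 < Qf x t.
Proof. intros hx. unfold Qf.
  assert (0 < x*(x-1)) by (destruct hx; nra).
  assert (0 <= (t^2-1)^2) by apply pow2_ge_0. nra. Qed.

Lemma P_ne x t : (1 < x \/ x < 0) -> 0 <= t <= 1 -> t^2 + 2*x - 1 <> 0.
Proof. intros hx ht. destruct hx; nra. Qed.

Lemma ff_bound x t : (1 < x \/ x < 0) -> 0 <= t <= 1 -> -1 <= ff x t <= 1.
Proof.
  intros hx ht. unfold ff. destruct hx as [h|h].
  - assert (hP : 0 < t^2 + 2*x - 1) by nra.
    split.
    + apply (Rmult_le_reg_r (t^2+2*x-1)); auto. unfold Rdiv. rewrite Rmult_assoc, Rinv_l; nra.
    + apply (Rmult_le_reg_r (t^2+2*x-1)); auto. unfold Rdiv. rewrite Rmult_assoc, Rinv_l; nra.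
  - assert (hP : 0 < -(t^2 + 2*x - 1)) by nra.
    replace (2*x*t/(t^2+2*x-1)) with ((-2*x*t)/(-(t^2+2*x-1))) by (field; lra).
    split.
    + apply (Rmult_le_reg_r (-(t^2+2*x-1))); auto. unfold Rdiv. rewrite Rmult_assoc, Rinv_l; nra.
    + apply (Rmult_le_reg_r (-(t^2+2*x-1))); auto. unfold Rdiv. rewrite Rmult_assoc, Rinv_l; nra.
Qed.

Lemma K_der x t : (1 < x \/ x < 0) -> 0 <= t <= 1 -> is_derive (K x) t (Kd x t).
Proof.
  intros hx ht.
  assert (hQ := Qf_pos x t hx). assert (hP := P_ne x t hx ht).
  assert (hb := ff_bound x t hx ht).
  assert (hx0 : x <> 0) by (destruct hx; lra).
  assert (H1 := Psi_der x (ff x t) hx hb).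
  assert (H2 : is_derive (fun t => Psi x (ff x t)) t
     (scal (2*x*(2*x-1-t^2)/(t^2+2*x-1)^2) (x / (x - ff x t ^ 2)))).
  { apply (is_derive_comp (Psi x) (ff x)); auto.
    unfold ff. auto_derive; auto. field; auto. }
  assert (H3 : is_derive (fun t => Nf x t / Qf x t ^ 2) t
    (((3 + 86*x - 156*x^2 + 72*x^3) + 3*(-9 - 40*x + 68*x^2 - 32*x^3)*t^2
   + 5*(9+2*x)*t^4 - 21*t^6)/(4*x) / Qf x t ^ 2
     - 2 * Nf x t * (4*t^3 - 4*t) / Qf x t ^ 3)).
  { unfold Nf, Qf in *. auto_derive. - revert hQ; simpl; intros hQ. apply Rmult_integral_contrapositive_currified; [lra|]. apply Rmult_integral_contrapositive_currified; lra.
    - field. split; auto; lra. }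
  unfold K.
  assert (H4 := is_derive_plus _ _ t _ _ H3 (is_derive_scal _ t (3/(8*x^2)) _ H2)).
  simpl in H4.
  replace (Kd x t) with (plus
       (((3 + 86 * x - 156 * x ^ 2 + 72 * x ^ 3) +
         3 * (-9 - 40 * x + 68 * x ^ 2 - 32 * x ^ 3) * t ^ 2 +
         5 * (9 + 2 * x) * t ^ 4 - 21 * t ^ 6) / (4 * x) / 
        Qf x t ^ 2 - 2 * Nf x t * (4 * t ^ 3 - 4 * t) / Qf x t ^ 3)
       (scal (3 / (8 * x ^ 2))
          (scal (2 * x * (2 * x - 1 - t ^ 2) / (t ^ 2 + 2 * x - 1) ^ 2)
             (x / (x - ff x t ^ 2))))).
  { exact H4. }
  unfold plus, scal; simpl. unfold mult; simpl.
  assert (hxf : x - ff x t * (ff x t * 1) = x * Qf x t / (t ^ 2 + 2 * x - 1) ^ 2).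
  { unfold Qf, ff. field. auto. }
  rewrite hxf. unfold Kd, Nf, Qf in *. field. repeat split; auto; lra.
Qed.

Definition G x s := K x (sqrt (1 - 4 * s)).

Lemma G_der x s : (1 < x \/ x < 0) -> 0 <= s < 1/4 ->
  is_derive (G x) s (s * Ffun x s / sqrt (1 - 4 * s)).
Proof.
  intros hx hs.
  assert (ht0 : 0 < sqrt (1 - 4*s)) by (apply sqrt_lt_R0; lra).
  assert (htt : sqrt (1 - 4*s) * sqrt (1 - 4*s) = 1 - 4*s) by (apply sqrt_sqrt; lra).
  assert (ht1 : sqrt (1 - 4*s) <= 1).
  { apply Rle_trans with (sqrt 1); [apply sqrt_le_1_alt; lra | rewrite sqrt_1; lra]. }
  assert (Hs : is_derive (fun s => sqrt (1 - 4*s)) s (-2 / sqrt (1 - 4*s))).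
  { auto_derive. lra. replace (1 + - (4*s)) with (1 - 4*s) by ring. field. lra. }
  assert (H := is_derive_comp (K x) (fun s => sqrt (1 - 4*s)) s _ _
     (K_der x (sqrt (1 - 4*s)) hx (conj (Rlt_le _ _ ht0) ht1)) Hs).
  unfold G.
  replace (s * Ffun x s / sqrt (1 - 4 * s)) with
    (scal (-2 / sqrt (1 - 4*s)) (Kd x (sqrt (1 - 4 * s)))).
  { exact H. }
  unfold scal; simpl; unfold mult; simpl.
  assert (hQ := Qf_pos x (sqrt (1 - 4*s)) hx).
  assert (hx0 : x <> 0) by (destruct hx; lra).
  set (t := sqrt (1 - 4*s)) in *.
  replace s with ((1 - t*t)/4) by lra.
  unfold Kd, Ffun. unfold Qf in *. field.
  repeat split; try lra.
  all: intro Hc; nra.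
Qed.

Lemma g_cont x s : (1 < x \/ x < 0) -> s < 1/4 ->
  continuous (fun s => s * Ffun x s / sqrt (1 - 4 * s)) s.
Proof.
  intros hx hs. apply (@ex_derive_continuous R_AbsRing R_NormedModule).
  assert (0 < x*(x-1)) by (destruct hx; nra).
  assert (0 < sqrt (1 - 4*s)) by (apply sqrt_lt_R0; lra).
  unfold Ffun. auto_derive.
  assert (0 < 4 * (s * (s * 1)) + x * (x - 1)) by nra.
  repeat split; try lra; try (intro Hc; nra).
  - repeat apply Rmult_integral_contrapositive_currified; lra.
  - replace (1 + - (4*s)) with (1 - 4*s) by ring. lra.
Qed.

Lemma K_cont0 x : (1 < x \/ x < 0) -> continuous (K x) 0.
Proof.
  intros hx. apply (@ex_derive_continuous R_AbsRing R_NormedModule). exists (Kd x 0). apply K_der; auto; lra.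
Qed.

Lemma G_lim x : (1 < x \/ x < 0) -> filterlim (G x) (at_left (1/4)) (locally (G x (1/4))).
Proof.
  intros hx. apply (filterlim_filter_le_1 (F := locally (1/4))).
  { apply filter_le_within. }
  unfold G. apply (continuous_comp (fun s => sqrt (1 - 4 * s)) (K x)).
  - apply (continuous_comp (fun s => 1 - 4 * s) sqrt).
    + apply (@ex_derive_continuous R_AbsRing R_NormedModule). auto_derive. auto.
    + apply continuity_pt_filterlim. apply continuity_pt_sqrt. lra.
  - replace (1 - 4 * (1/4)) with 0 by field. rewrite sqrt_0. apply K_cont0; auto.
Qed.

Theorem lemma5p2 (x : R) (hx : 1 < x \/ x < 0) :
  exists I : R,
    is_RInt_gen (fun s => s * Ffun x s / sqrt (1 - 4 * s))
      (at_point 0) (at_left (1 / 4)) I /\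
    8 * x ^ 2 * (1 - x) * I = 3 * (x - 1) * Rfun x + 5 * x - 6.
Proof.
  exists (G x (1/4) - G x 0). split.
  - unfold is_RInt_gen.
    apply filterlimi_lim_ext_loc with (f := fun ab => G x (snd ab) - G x (fst ab)).
    + apply Filter_prod with (fun a => a = 0) (fun b => 0 < b < 1/4).
      * unfold at_point. reflexivity.
      * assert (hp : 0 < 1/4) by lra. exists (mkposreal _ hp). intros y hy hlt.
        unfold ball in hy; simpl in hy. unfold AbsRing_ball, abs, minus, plus, opp in hy; simpl in hy.
        apply Rabs_def2 in hy. split; lra.
      * intros a b -> hb. simpl.
        apply (is_RInt_derive (G x)).
        -- intros u hu. rewrite Rmin_left in hu by lra. rewrite Rmax_right in hu by lra.
           apply G_der; auto; lra.
        -- intros u hu. rewrite Rmin_left in hu by lra. rewrite Rmax_right in hu by lra.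
           apply g_cont; auto; lra.
    + apply (@filterlim_comp_2 (R*R) R R R _ (locally (G x (1/4))) (locally (G x 0)) _ _ (fun ab : R * R => G x (snd ab)) (fun ab : R * R => G x (fst ab)) Rminus).
      * apply (filterlim_comp _ _ _ snd (G x) _ (at_left (1/4))). apply filterlim_snd. apply G_lim; auto.
      * apply (filterlim_comp _ _ _ fst (G x) _ (at_point 0)). apply filterlim_fst.
        intros P HP. unfold filtermap, at_point. apply locally_singleton. exact HP.
      * apply (@filterlim_comp_2 (R*R) R R R _ (locally (G x (1/4))) (locally (opp (G x 0))) _ _ fst (fun z : R * R => opp (snd z)) (@plus R_AbelianGroup)).
        -- apply filterlim_fst.
        -- apply (filterlim_comp _ _ _ snd (@opp R_AbelianGroup) _ (locally (G x 0))). apply filterlim_snd. apply (@filterlim_opp R_AbsRing R_NormedModule).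
        -- apply (@filterlim_plus R_AbsRing R_NormedModule).
  - assert (hx0 : x <> 0) by (destruct hx; lra).
    assert (hx1 : x - 1 <> 0) by (destruct hx; lra).
    unfold G, K.
    replace (1 - 4 * (1/4)) with 0 by field. rewrite sqrt_0.
    replace (1 - 4 * 0) with 1 by ring. rewrite sqrt_1.
    replace (ff x 0) with 0 by (unfold ff; field; lra).
    replace (ff x 1) with 1 by (unfold ff; field; lra).
    rewrite Psi0, Psi1. unfold Nf, Qf. field. repeat split; auto; try (destruct hx; lra).
    intro Hc. destruct hx; nra.
Qed.
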